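(* Let $p=1$, $0<q<1$, $\lambda>0$, and $K:=(v\lambda q(1-q))^{\frac1{2-q}}$. Let $\{x^k\}$ be generated by PGM-GSO with stepsize $0<v<\frac12\|A\|_2^{-2}$. Then: (i) for every $i\in\{1,\dots,r\}$ and every $k\ge1$, if $x^k_{\mathcal{G}_i}\ne0$ then $\|x^k_{\mathcal{G}_i}\|_1\ge K$; (ii) there exist $N\in\mathbb{N}$ and $\mathcal{I}\subseteq\{1,\dots,r\}$ such that for all $k\ge N$: $x^k_{\mathcal{G}_i}\ne0$ for $i\in\mathcal{I}$ and $x^k_{\mathcal{G}_i}=0$ for $i\notin\mathcal{I}$.
   Context: Group structure: $\{1,\dots,n\}$ is partitioned into disjoint nonempty index sets $\mathcal{G}_1,\dots,\mathcal{G}_r$; $x_{\mathcal{G}_i}$ is the subvector indexed by $\mathcal{G}_i$; $\|x\|_{1,q}^q:=\sum_{i=1}^r\|x_{\mathcal{G}_i}\|_1^q$. Given $A\in\mathbb{R}^{m\times n}$, $b\in\mathbb{R}^m$, PGM-GSO: choose $x^0\in\mathbb{R}^n$ and for $k\ge0$ set $z^k=x^k-2vA^\top(Ax^k-b)$ and choose $x^{k+1}\in\operatorname{Arg\,min}_{x\in\mathbb{R}^n}\{\lambda\|x\|_{1,q}^q+\frac1{2v}\|x-z^k\|_2^2\}$. *)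

(* Defs.v *)
From Stdlib Require Import Reals Lra.
Open Scope R_scope.

Fixpoint rsum (n : nat) (f : nat -> R) : R :=
  match n with O => 0 | S n' => rsum n' f + f n' end.

(* real power with 0^q = 0 (Stdlib's Rpower 0 q = 1); used only on nonneg bases *)
Definition rpow (x q : R) : R :=
  if Rle_dec x 0 then 0 else Rpower x q.

(* vectors of R^n are functions nat -> R, only indices < n matter;
   a matrix A in R^{m x n} is A : nat -> nat -> R with entries A a j, a < m, j < n *)
Definition matvec (m n : nat) (A : nat -> nat -> R) (x : nat -> R) : nat -> R :=
  fun a => rsum n (fun j => A a j * x j).
Definition tmatvec (m n : nat) (A : nat -> nat -> R) (w : nat -> R) : nat -> R :=
  fun j => rsum m (fun a => A a j * w a).

Definition norm2 (n : nat) (x : nat -> R) : R := sqrt (rsum n (fun j => x j ^ 2)).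

Definition is_spectral_norm (m n : nat) (A : nat -> nat -> R) (s : R) : Prop :=
  is_lub (fun t => exists x : nat -> R, norm2 n x <= 1 /\ t = norm2 m (matvec m n A x)) s.

(* Group structure: grp j is the (0-based) index of the group containing coordinate j.
   It is a partition of {0..n-1} into r nonempty groups G_0..G_{r-1}. *)
Definition is_group_partition (n r : nat) (grp : nat -> nat) : Prop :=
  (forall j, (j < n)%nat -> (grp j < r)%nat) /\
  (forall i, (i < r)%nat -> exists j, (j < n)%nat /\ grp j = i).

Definition gnorm1 (n : nat) (grp : nat -> nat) (x : nat -> R) (i : nat) : R :=
  rsum n (fun j => if Nat.eqb (grp j) i then Rabs (x j) else 0).

Definition group_zero (n : nat) (grp : nat -> nat) (x : nat -> R) (i : nat) : Prop :=
  forall j, (j < n)%nat -> grp j = i -> x j = 0.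

Definition gso_pen (n r : nat) (grp : nat -> nat) (q : R) (x : nat -> R) : R :=
  rsum r (fun i => rpow (gnorm1 n grp x i) q).

Definition grad_step (m n : nat) (A : nat -> nat -> R) (b : nat -> R) (v : R)
  (x : nat -> R) : nat -> R :=
  fun j => x j - 2 * v * tmatvec m n A (fun a => matvec m n A x a - b a) j.

Definition prox_obj (n r : nat) (grp : nat -> nat) (lam q v : R) (z y : nat -> R) : R :=
  lam * gso_pen n r grp q y + / (2 * v) * rsum n (fun j => (y j - z j) ^ 2).

Definition pgm_gso (m n r : nat) (grp : nat -> nat) (A : nat -> nat -> R) (b : nat -> R)
  (lam q v : R) (x : nat -> nat -> R) : Prop :=
  forall k, forall y : nat -> R,
    prox_obj n r grp lam q v (grad_step m n A b v (x k)) (x (S k))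
    <= prox_obj n r grp lam q v (grad_step m n A b v (x k)) y.

(* Main.v *)
Require Import Defs.
From Stdlib Require Import Reals Lra Lia Psatz Classical.
Open Scope R_scope.

Lemma rsum_ext n f g : (forall j, (j < n)%nat -> f j = g j) -> rsum n f = rsum n g.
Proof. induction n; simpl; intros H; auto. rewrite IHn by (intros; apply H; lia). rewrite H by lia; auto. Qed.

Lemma rsum_plus n f g : rsum n (fun j => f j + g j) = rsum n f + rsum n g.
Proof. induction n; simpl; [lra|]. rewrite IHn; lra. Qed.

Lemma rsum_scal n c f : rsum n (fun j => c * f j) = c * rsum n f.
Proof. induction n; simpl; [lra|]. rewrite IHn; lra. Qed.

Lemma rsum_zero n : rsum n (fun _ => 0) = 0.
Proof. induction n; simpl; [lra|]. rewrite IHn; lra. Qed.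

Lemma rsum_le n f g : (forall j, (j < n)%nat -> f j <= g j) -> rsum n f <= rsum n g.
Proof. induction n; simpl; intros H; [lra|]. assert (H1 := H n ltac:(lia)). assert (rsum n f <= rsum n g) by (apply IHn; intros; apply H; lia). lra. Qed.

Lemma rsum_nonneg n f : (forall j, (j < n)%nat -> 0 <= f j) -> 0 <= rsum n f.
Proof. intros H. rewrite <- (rsum_zero n). apply rsum_le; auto. Qed.

Lemma rsum_term n f j0 : (forall j, (j < n)%nat -> 0 <= f j) -> (j0 < n)%nat -> f j0 <= rsum n f.
Proof. induction n; simpl; intros H Hj; [lia|].
  assert (0 <= rsum n f) by (apply rsum_nonneg; intros; apply H; lia).
  destruct (Nat.eq_dec j0 n). subst; lra.
  assert (f j0 <= rsum n f) by (apply IHn; [intros; apply H; lia | lia]).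
  assert (0 <= f n) by (apply H; lia). lra. Qed.

Lemma rsum_bound n f M : (forall j, (j < n)%nat -> f j <= M) -> rsum n f <= INR n * M.
Proof. induction n; cbn [rsum]; intros H; [simpl; lra|].
  assert (rsum n f <= INR n * M) by (apply IHn; intros; apply H; lia).
  assert (f n <= M) by (apply H; lia). rewrite S_INR. lra. Qed.

Lemma rsum_swap m n (F : nat -> nat -> R) :
  rsum m (fun a => rsum n (fun j => F a j)) = rsum n (fun j => rsum m (fun a => F a j)).
Proof. induction m; simpl. now rewrite rsum_zero. rewrite IHm, <- rsum_plus. reflexivity. Qed.

Lemma rsum_update r f f' i : (i < r)%nat -> (forall j, j <> i -> f' j = f j) ->
  rsum r f' = rsum r f - f i + f' i.
Proof. induction r; simpl; intros Hi H; [lia|].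
  destruct (Nat.eq_dec i r). subst.
  rewrite (rsum_ext r f' f) by (intros; apply H; lia). lra.
  rewrite IHr by (auto; lia). rewrite (H r) by lia. lra. Qed.

Lemma rsum_sq_le n g : (forall j, (j < n)%nat -> 0 <= g j) -> rsum n (fun j => g j ^ 2) <= (rsum n g) ^ 2.
Proof. induction n; simpl; intros H; [lra|].
  assert (rsum n (fun j => g j ^ 2) <= rsum n g ^ 2) by (apply IHn; intros; apply H; lia).
  assert (0 <= rsum n g) by (apply rsum_nonneg; intros; apply H; lia).
  assert (0 <= g n) by (apply H; lia). simpl in *. nra. Qed.

Definition pert (grp : nat -> nat) (i : nat) (t : R) (y : nat -> R) : nat -> R :=
  fun j => if Nat.eqb (grp j) i then t * y j else y j.

Lemma gnorm1_pert_same n grp i t y : 0 <= t ->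
  gnorm1 n grp (pert grp i t y) i = t * gnorm1 n grp y i.
Proof. intros Ht. unfold gnorm1. rewrite <- rsum_scal. apply rsum_ext. intros j _.
  unfold pert. destruct (Nat.eqb (grp j) i). rewrite Rabs_mult, Rabs_pos_eq; auto. ring. Qed.

Lemma gnorm1_pert_other n grp i i' t y : i' <> i ->
  gnorm1 n grp (pert grp i t y) i' = gnorm1 n grp y i'.
Proof. intros Hi. unfold gnorm1. apply rsum_ext. intros j _.
  unfold pert. destruct (Nat.eqb (grp j) i') eqn:E; auto.
  apply Nat.eqb_eq in E. destruct (Nat.eqb (grp j) i) eqn:E2; auto.
  apply Nat.eqb_eq in E2. lia. Qed.

Lemma pen_pert n r grp q i t y : (i < r)%nat -> 0 <= t ->
  gso_pen n r grp q (pert grp i t y) =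
  gso_pen n r grp q y - rpow (gnorm1 n grp y i) q + rpow (t * gnorm1 n grp y i) q.
Proof. intros Hi Ht. unfold gso_pen.
  rewrite (rsum_update r (fun i0 => rpow (gnorm1 n grp y i0) q) _ i Hi).
  rewrite gnorm1_pert_same; auto.
  intros j Hj. rewrite gnorm1_pert_other; auto. Qed.

Definition gaa n grp i (y : nat -> R) := rsum n (fun j => if Nat.eqb (grp j) i then y j ^ 2 else 0).
Definition gcc n grp i (y z : nat -> R) := rsum n (fun j => if Nat.eqb (grp j) i then y j * z j else 0).

Lemma rsum_lin3 n f g h a c : rsum n (fun j => f j + a * g j + c * h j) = rsum n f + a * rsum n g + c * rsum n h.
Proof. induction n; cbn [rsum]; [ring|]. rewrite IHn; ring. Qed.

Lemma quad_pert n grp i t y z :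
  rsum n (fun j => (pert grp i t y j - z j) ^ 2) =
  rsum n (fun j => (y j - z j) ^ 2) + (t ^ 2 - 1) * gaa n grp i y - 2 * (t - 1) * gcc n grp i y z.
Proof. unfold gaa, gcc.
  replace (rsum n (fun j => (y j - z j) ^ 2) + (t ^ 2 - 1) * rsum n (fun j => if Nat.eqb (grp j) i then y j ^ 2 else 0) - 2 * (t - 1) * rsum n (fun j => if Nat.eqb (grp j) i then y j * z j else 0))
  with (rsum n (fun j => (y j - z j) ^ 2) + (t ^ 2 - 1) * rsum n (fun j => if Nat.eqb (grp j) i then y j ^ 2 else 0) + (- (2 * (t - 1))) * rsum n (fun j => if Nat.eqb (grp j) i then y j * z j else 0)) by ring.
  rewrite <- rsum_lin3. apply rsum_ext. intros j _. unfold pert.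
  destruct (Nat.eqb (grp j) i); ring. Qed.

Lemma core_ineq (lam q v P aa cc E e : R) :
  0 < q -> q < 1 -> 0 < lam -> 0 < v -> 0 < P ->
  2 < e -> e <= 3 -> E * (2 - q) <= e ->
  0 <= lam * (0 - P) + / (2 * v) * ((0 ^ 2 - 1) * aa - 2 * (0 - 1) * cc) ->
  0 <= lam * (E * P - P) + / (2 * v) * ((e ^ 2 - 1) * aa - 2 * (e - 1) * cc) ->
  v * lam * q * (1 - q) * P <= aa.
Proof. intros Hq Hq1 Hl Hv HP He He3 HE H0 H1.
  assert (Hiv : / (2 * v) * (2 * v) = 1) by (field; lra).
  assert (Hiv' : 0 < / (2 * v)) by (apply Rinv_0_lt_compat; lra).
  assert (A0 : 2 * v * lam * P + aa <= 2 * cc).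
  { assert (0 <= 2 * v * (lam * (0 - P) + / (2 * v) * ((0 ^ 2 - 1) * aa - 2 * (0 - 1) * cc))) by nra.
    replace (2 * v * (lam * (0 - P) + / (2 * v) * ((0 ^ 2 - 1) * aa - 2 * (0 - 1) * cc)))
      with (- 2 * v * lam * P + (/ (2 * v) * (2 * v)) * (- aa + 2 * cc)) in H by ring.
    rewrite Hiv in H. lra. }
  assert (A1 : 0 <= 2 * v * lam * P * (E - 1) + (e ^ 2 - 1) * aa - 2 * (e - 1) * cc).
  { assert (0 <= 2 * v * (lam * (E * P - P) + / (2 * v) * ((e ^ 2 - 1) * aa - 2 * (e - 1) * cc))) by nra.
    replace (2 * v * (lam * (E * P - P) + / (2 * v) * ((e ^ 2 - 1) * aa - 2 * (e - 1) * cc)))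
      with (2 * v * lam * P * (E - 1) + (/ (2 * v) * (2 * v)) * ((e ^ 2 - 1) * aa - 2 * (e - 1) * cc)) in H by ring.
    rewrite Hiv in H. lra. }
  set (W := v * lam * P).
  assert (HW : 0 < W) by (unfold W; apply Rmult_lt_0_compat; [nra|lra]).
  assert (A2 : (e - 1) * (2 * W + aa) <= 2 * W * (E - 1) + (e ^ 2 - 1) * aa).
  { assert ((e - 1) * (2 * W + aa) <= (e - 1) * (2 * cc)) by (apply Rmult_le_compat_l; unfold W in *; lra).
    unfold W in *; nra. }
  assert (A3 : 2 * W * (e - E) <= e * (e - 1) * aa) by nra.
  assert (A4 : e * (1 - q) <= (2 - q) * (e - E)) by (replace ((2 - q) * (e - E)) with (2 * e - q * e - E * (2 - q)) by ring; lra).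
  assert (A5 : 2 * W * e * (1 - q) <= e * (e - 1) * (2 - q) * aa) by nra.
  assert (A6 : 2 * W * (1 - q) <= (e - 1) * (2 - q) * aa).
  { apply (Rmult_le_reg_l e); [lra|]. nra. }
  assert (A7 : (e - 1) * q * (2 - q) <= 2).
  { assert (q * (2 - q) <= 1) by nra. assert (0 <= q * (2 - q)) by nra.
    assert ((e - 1) * (q * (2 - q)) <= 2 * 1) by (apply Rmult_le_compat; lra). nra. }
  assert (A8 : (e - 1) * (2 - q) * (W * q * (1 - q)) <= (e - 1) * (2 - q) * aa).
  { assert (0 <= W * (1 - q)) by nra. nra. }
  replace (v * lam * q * (1 - q) * P) with (W * q * (1 - q)) by (unfold W; ring).
  apply (Rmult_le_reg_l ((e - 1) * (2 - q))); [nra|]. exact A8.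
Qed.

Lemma gnorm1_nonneg n grp y i : 0 <= gnorm1 n grp y i.
Proof. apply rsum_nonneg. intros j _. destruct (Nat.eqb (grp j) i); [apply Rabs_pos|lra]. Qed.

Lemma rpow_nonneg a q : 0 <= rpow a q.
Proof. unfold rpow. destruct (Rle_dec a 0); [lra|]. unfold Rpower. left; apply exp_pos. Qed.

Lemma rpow_pos a q : 0 < a -> rpow a q = Rpower a q.
Proof. intros H. unfold rpow. destruct (Rle_dec a 0); [lra|auto]. Qed.

Lemma not_group_zero_pos n grp y i : ~ group_zero n grp y i -> 0 < gnorm1 n grp y i.
Proof. intros H. unfold group_zero in H.
  apply not_all_ex_not in H. destruct H as [j H].
  apply imply_to_and in H. destruct H as [Hj H].
  apply imply_to_and in H. destruct H as [Hg H].
  assert (Hle : (if Nat.eqb (grp j) i then Rabs (y j) else 0) <= gnorm1 n grp y i).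
  { apply (rsum_term n (fun j => if Nat.eqb (grp j) i then Rabs (y j) else 0)); auto.
    intros j' _. destruct (Nat.eqb (grp j') i); [apply Rabs_pos|lra]. }
  rewrite (proj2 (Nat.eqb_eq _ _) Hg) in Hle.
  assert (0 < Rabs (y j)) by (apply Rabs_pos_lt; auto). lra. Qed.

Lemma gaa_le n grp i y : gaa n grp i y <= gnorm1 n grp y i ^ 2.
Proof. unfold gaa, gnorm1.
  rewrite <- (rsum_ext n (fun j => (if Nat.eqb (grp j) i then Rabs (y j) else 0) ^ 2)).
  apply rsum_sq_le. intros j _. destruct (Nat.eqb (grp j) i); [apply Rabs_pos|lra].
  intros j _. destruct (Nat.eqb (grp j) i); [apply pow2_abs | ring]. Qed.

Lemma part1 n r grp lam q v (z y : nat -> R) i :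
  0 < q -> q < 1 -> 0 < lam -> 0 < v ->
  (forall y', prox_obj n r grp lam q v z y <= prox_obj n r grp lam q v z y') ->
  (i < r)%nat -> ~ group_zero n grp y i ->
  rpow (v * lam * q * (1 - q)) (/ (2 - q)) <= gnorm1 n grp y i.
Proof. intros Hq Hq1 Hl Hv Hmin Hi Hnz.
  set (s := gnorm1 n grp y i).
  assert (Hs : 0 < s) by (apply not_group_zero_pos; auto).
  set (P := Rpower s q).
  assert (HP : 0 < P) by (unfold P, Rpower; apply exp_pos).
  assert (Hmin' : forall t, 0 <= t -> 0 <= lam * (rpow (t * s) q - P) + / (2 * v) * ((t ^ 2 - 1) * gaa n grp i y - 2 * (t - 1) * gcc n grp i y z)).
  { intros t Ht. specialize (Hmin (pert grp i t y)). unfold prox_obj in Hmin.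
    rewrite pen_pert, quad_pert in Hmin by auto. fold s in Hmin.
    rewrite (rpow_pos s) in Hmin by auto. fold P in Hmin. nra. }
  set (e := exp 1).
  assert (He : 2 < e) by (unfold e; generalize (exp_ineq1 1 ltac:(lra)); lra).
  assert (He3 : e <= 3) by apply exp_le_3.
  assert (HE : exp q * (2 - q) <= e).
  { assert (2 - q <= exp (1 - q)) by (generalize (exp_ineq1_le (1 - q)); lra).
    unfold e. replace (exp 1) with (exp (q + (1 - q))) by (f_equal; ring). rewrite exp_plus.
    apply Rmult_le_compat_l; auto. left; apply exp_pos. }
  assert (Haa : v * lam * q * (1 - q) * P <= gaa n grp i y).
  { apply (core_ineq lam q v P _ (gcc n grp i y z) (exp q) e); auto.
    - generalize (Hmin' 0 ltac:(lra)). replace (0 * s) with 0 by ring.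
      unfold rpow at 1. destruct (Rle_dec 0 0); [|lra]. intros; lra.
    - generalize (Hmin' e ltac:(lra)). rewrite rpow_pos by nra.
      rewrite <- Rpower_mult_distr by lra. unfold e at 1. unfold Rpower at 1. rewrite ln_exp.
      replace (q * 1) with q by ring. fold P. auto. }
  assert (Hs2 := gaa_le n grp i y). fold s in Hs2.
  set (K0 := v * lam * q * (1 - q)) in *.
  assert (HK0 : 0 < K0) by (unfold K0; apply Rmult_lt_0_compat; [|lra]; apply Rmult_lt_0_compat; [|lra]; nra).
  rewrite rpow_pos by auto.
  assert (Hs2q : Rpower s (2 - q) = s ^ 2 / P).
  { unfold Rminus. rewrite Rpower_plus, Rpower_Ropp. fold P.
    replace 2 with (INR 2) at 1 by (simpl; ring). rewrite Rpower_pow by auto. reflexivity. }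
  assert (HK : K0 <= Rpower s (2 - q)).
  { rewrite Hs2q. apply (Rmult_le_reg_r P); auto. unfold Rdiv. rewrite Rmult_assoc, Rinv_l by lra. lra. }
  replace s with (Rpower (Rpower s (2 - q)) (/ (2 - q))) at 1.
  2: { rewrite Rpower_mult. replace ((2 - q) * / (2 - q)) with 1 by (field; lra). apply Rpower_1; auto. }
  apply Rle_Rpower_l. left; apply Rinv_0_lt_compat; lra. split; auto.
Qed.

Lemma rsum_abs n f : Rabs (rsum n f) <= rsum n (fun j => Rabs (f j)).
Proof. induction n; cbn [rsum]. rewrite Rabs_R0; lra.
  eapply Rle_trans; [apply Rabs_triang|]. lra. Qed.

Lemma sq_le_rsum n w j : (j < n)%nat -> w j ^ 2 <= rsum n (fun j => w j ^ 2).
Proof. intros Hj. apply (rsum_term n (fun j => w j ^ 2)); auto. intros; nra. Qed.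

Lemma matvec_scal m n A c w a : matvec m n A (fun j => c * w j) a = c * matvec m n A w a.
Proof. unfold matvec. rewrite <- rsum_scal. apply rsum_ext. intros; ring. Qed.

Lemma spec_exists m n A : exists s, is_spectral_norm m n A s.
Proof. unfold is_spectral_norm. apply upper_bound_thm.
  - set (B := rsum m (fun a => (rsum n (fun j => Rabs (A a j))) ^ 2)).
    exists (sqrt B). intros t [w [Hw ->]]. unfold norm2. apply sqrt_le_1_alt.
    apply rsum_le. intros a _.
    assert (Hw1 : rsum n (fun j => w j ^ 2) <= 1).
    { unfold norm2 in Hw. assert (H0 : 0 <= rsum n (fun j => w j ^ 2)) by (apply rsum_nonneg; intros; nra).
      rewrite <- (pow2_sqrt _ H0). generalize (sqrt_pos (rsum n (fun j => w j ^ 2))). nra. }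
    assert (Hb : Rabs (matvec m n A w a) <= rsum n (fun j => Rabs (A a j))).
    { unfold matvec. eapply Rle_trans; [apply rsum_abs|]. apply rsum_le. intros j Hj.
      rewrite Rabs_mult. assert (w j ^ 2 <= 1) by (eapply Rle_trans; [apply sq_le_rsum; eauto| auto]).
      assert (Rabs (w j) <= 1). { rewrite <- pow2_abs in H. generalize (Rabs_pos (w j)). nra. }
      generalize (Rabs_pos (A a j)). nra. }
    rewrite <- (pow2_abs (matvec m n A w a)). generalize (Rabs_pos (matvec m n A w a)). nra.
  - exists (norm2 m (matvec m n A (fun _ => 0))). exists (fun _ => 0). split; auto.
    unfold norm2. rewrite (rsum_ext n _ (fun _ => 0)) by (intros; ring). rewrite rsum_zero, sqrt_0. lra.
Qed.

Lemma spec_bound m n A s : is_spectral_norm m n A s -> forall w,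
  rsum m (fun a => matvec m n A w a ^ 2) <= s ^ 2 * rsum n (fun j => w j ^ 2).
Proof. intros [Hub _] w. set (W := rsum n (fun j => w j ^ 2)).
  assert (HW0 : 0 <= W) by (apply rsum_nonneg; intros; nra).
  destruct (Req_dec W 0) as [HW|HW].
  - assert (Hz : forall j, (j < n)%nat -> w j = 0).
    { intros j Hj. assert (w j ^ 2 <= W) by (apply sq_le_rsum; auto). nra. }
    rewrite (rsum_ext m _ (fun _ => 0)). rewrite rsum_zero, HW. lra.
    intros a _. unfold matvec. rewrite (rsum_ext n _ (fun _ => 0)). rewrite rsum_zero; ring.
    intros j Hj. rewrite Hz; auto; ring.
  - assert (HWp : 0 < W) by lra.
    set (c := / sqrt W).
    assert (Hsq : 0 < sqrt W) by (apply sqrt_lt_R0; auto).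
    assert (Hc2 : c ^ 2 = / W).
    { unfold c. rewrite pow_inv, pow2_sqrt; auto. }
    assert (Hu : norm2 n (fun j => c * w j) <= 1).
    { unfold norm2. rewrite (rsum_ext n _ (fun j => c ^ 2 * w j ^ 2)) by (intros; ring).
      rewrite rsum_scal. fold W. rewrite Hc2, Rinv_l by lra. rewrite sqrt_1; lra. }
    assert (Hs := Hub _ (ex_intro _ _ (conj Hu eq_refl))).
    unfold norm2 in Hs.
    rewrite (rsum_ext m _ (fun a => c ^ 2 * matvec m n A w a ^ 2)) in Hs
      by (intros; rewrite matvec_scal; ring).
    rewrite rsum_scal, Hc2 in Hs.
    set (L := rsum m (fun a => matvec m n A w a ^ 2)) in *.
    assert (HL : 0 <= L) by (apply rsum_nonneg; intros; nra).
    assert (H0 : 0 <= / W * L) by (apply Rmult_le_pos; [left; apply Rinv_0_lt_compat|]; auto).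
    assert (H1 : / W * L <= s ^ 2).
    { rewrite <- (pow2_sqrt _ H0). generalize (sqrt_pos (/ W * L)). nra. }
    apply (Rmult_le_reg_l (/ W)). apply Rinv_0_lt_compat; auto.
    replace (/ W * (s ^ 2 * W)) with (s ^ 2) by (field; lra). auto.
Qed.

Definition Fobj m n r grp A b lam q (x : nat -> R) :=
  rsum m (fun a => (matvec m n A x a - b a) ^ 2) + lam * gso_pen n r grp q x.

Lemma rsum_lin3' n f g h a c : rsum n (fun j => f j + a * g j + c * h j) = rsum n f + a * rsum n g + c * rsum n h.
Proof. induction n; cbn [rsum]; [ring|]. rewrite IHn; ring. Qed.

Lemma descent m n r grp A b lam q v s (x y : nat -> R) :
  0 < v -> is_spectral_norm m n A s ->
  (forall y', prox_obj n r grp lam q v (grad_step m n A b v x) y <= prox_obj n r grp lam q v (grad_step m n A b v x) y') ->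
  Fobj m n r grp A b lam q y <= Fobj m n r grp A b lam q x - (/ (2 * v) - s ^ 2) * rsum n (fun j => (y j - x j) ^ 2).
Proof. intros Hv Hs Hmin.
  set (rx := fun a => matvec m n A x a - b a).
  set (g := tmatvec m n A rx).
  set (d := fun j => y j - x j).
  set (D := rsum n (fun j => d j ^ 2)).
  set (G := rsum n (fun j => d j * g j)).
  set (g2 := rsum n (fun j => g j ^ 2)).
  specialize (Hmin x). unfold prox_obj in Hmin.
  assert (E1 : rsum n (fun j => (y j - grad_step m n A b v x j) ^ 2) = D + 4 * v * G + (4 * v ^ 2) * g2).
  { unfold D, G, g2. rewrite <- rsum_lin3'. apply rsum_ext. intros j _.
    unfold grad_step, d. fold rx. fold g. ring. }
  assert (E2 : rsum n (fun j => (x j - grad_step m n A b v x j) ^ 2) = (4 * v ^ 2) * g2).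
  { unfold g2. rewrite <- rsum_scal. apply rsum_ext. intros j _.
    unfold grad_step. fold rx. fold g. ring. }
  rewrite E1, E2 in Hmin.
  assert (Hiv : / (2 * v) * (2 * v) = 1) by (field; lra).
  assert (Hpen : lam * gso_pen n r grp q y + / (2 * v) * D + 2 * G <= lam * gso_pen n r grp q x).
  { replace (/ (2 * v) * (D + 4 * v * G + 4 * v ^ 2 * g2)) with (/ (2 * v) * D + 2 * G * (/ (2 * v) * (2 * v)) + / (2 * v) * (4 * v ^ 2 * g2)) in Hmin by ring.
    rewrite Hiv in Hmin. lra. }
  set (Ad := fun a => matvec m n A d a).
  assert (E3 : rsum m (fun a => (matvec m n A y a - b a) ^ 2) = rsum m (fun a => rx a ^ 2) + 2 * rsum m (fun a => rx a * Ad a) + 1 * rsum m (fun a => Ad a ^ 2)).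
  { rewrite <- rsum_lin3'. apply rsum_ext. intros a _.
    assert (matvec m n A y a = matvec m n A x a + Ad a).
    { unfold Ad, matvec. rewrite <- rsum_plus. apply rsum_ext. intros j _. unfold d. ring. }
    rewrite H. unfold rx. ring. }
  assert (E4 : rsum m (fun a => rx a * Ad a) = G).
  { unfold Ad, matvec, G, g, tmatvec.
    rewrite (rsum_ext m _ (fun a => rsum n (fun j => rx a * A a j * d j))).
    rewrite rsum_swap. apply rsum_ext. intros j _. rewrite <- rsum_scal.
    apply rsum_ext. intros; ring.
    intros a _. rewrite <- rsum_scal. apply rsum_ext. intros; ring. }
  assert (E5 : rsum m (fun a => Ad a ^ 2) <= s ^ 2 * D) by (apply spec_bound; auto).
  unfold Fobj. rewrite E3, E4. fold D. unfold rx.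
  change (rsum n (fun j => (y j - x j) ^ 2)) with D.
  replace ((/ (2 * v) - s ^ 2) * D) with (/ (2 * v) * D - s ^ 2 * D) by ring. lra.
Qed.

Lemma eventually_small (F D : nat -> R) c0 dl : 0 < c0 -> 0 < dl ->
  (forall k, 0 <= F k) -> (forall k, F (S k) <= F k - c0 * D k) -> (forall k, 0 <= D k) ->
  exists N, forall k, (N <= k)%nat -> D k < dl.
Proof. intros Hc Hd HF Hdec HD. apply NNPP. intros Hn.
  assert (H : forall N, exists k, (N <= k)%nat /\ dl <= D k).
  { intros N. apply NNPP. intros H1. apply Hn. exists N. intros k Hk.
    apply Rnot_le_lt. intros H2. apply H1. exists k; auto. }
  assert (Hmono : forall k p, F (k + p)%nat <= F k).
  { intros k p. induction p. rewrite Nat.add_0_r; lra.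
    replace (k + S p)%nat with (S (k + p)) by lia.
    specialize (Hdec (k + p)%nat). specialize (HD (k + p)%nat). nra. }
  assert (Hcl : forall p, exists k, F k <= F 0%nat - INR p * (c0 * dl)).
  { induction p. exists 0%nat. simpl; lra.
    destruct IHp as [k Hk]. destruct (H k) as [k' [Hk' Hd']].
    exists (S k'). rewrite S_INR.
    assert (F k' <= F k) by (replace k' with (k + (k' - k))%nat by lia; apply Hmono).
    specialize (Hdec k'). nra. }
  destruct (INR_archimed (c0 * dl) (F 0%nat)) as [p Hp]. nra.
  destruct (Hcl p) as [k Hk]. specialize (HF k). lra.
Qed.

Lemma small_group n grp (u w : nat -> R) i M : 0 <= M ->
  group_zero n grp w i -> (forall j, (j < n)%nat -> Rabs (u j - w j) <= M) ->
  gnorm1 n grp u i <= INR n * M.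
Proof. intros HM Hz Hb. apply rsum_bound. intros j Hj.
  destruct (Nat.eqb (grp j) i) eqn:E; auto.
  apply Nat.eqb_eq in E. rewrite <- (Rminus_0_r (u j)). rewrite <- (Hz j Hj E). auto. Qed.

Theorem lemma3p1 (m n r : nat) (grp : nat -> nat) (A : nat -> nat -> R) (b : nat -> R)
  (lam q v : R) (x : nat -> nat -> R) :
  is_group_partition n r grp ->
  0 < q -> q < 1 -> 0 < lam ->
  0 < v -> (forall s, is_spectral_norm m n A s -> 2 * v * s ^ 2 < 1) ->
  pgm_gso m n r grp A b lam q v x ->
  (forall i k, (i < r)%nat -> (1 <= k)%nat -> ~ group_zero n grp (x k) i ->
     rpow (v * lam * q * (1 - q)) (/ (2 - q)) <= gnorm1 n grp (x k) i)
  /\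
  (exists (N : nat) (I : nat -> Prop),
     (forall i, I i -> (i < r)%nat) /\
     forall k, (N <= k)%nat -> forall i, (i < r)%nat ->
       (I i -> ~ group_zero n grp (x k) i) /\ (~ I i -> group_zero n grp (x k) i)).
Proof.
  intros Hpart Hq Hq1 Hl Hv Hspec Hpgm.
  set (K := rpow (v * lam * q * (1 - q)) (/ (2 - q))).
  assert (P1 : forall i k, (i < r)%nat -> (1 <= k)%nat -> ~ group_zero n grp (x k) i ->
     K <= gnorm1 n grp (x k) i).
  { intros i k Hi Hk Hnz. destruct k as [|k']; [lia|].
    apply (part1 n r grp lam q v (grad_step m n A b v (x k'))); auto. }
  split; [exact P1|].
  assert (HK0 : 0 < v * lam * q * (1 - q)).
  { apply Rmult_lt_0_compat; [|lra]. apply Rmult_lt_0_compat; [|lra]. nra. }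
  assert (HK : 0 < K). { unfold K. rewrite rpow_pos by auto. unfold Rpower; apply exp_pos. }
  destruct (spec_exists m n A) as [s Hs].
  assert (Hs2 := Hspec s Hs).
  set (c0 := / (2 * v) - s ^ 2).
  assert (Hc0 : 0 < c0).
  { unfold c0. assert (s ^ 2 * (2 * v) < 1) by lra.
    apply Rlt_0_minus. apply (Rmult_lt_reg_r (2 * v)); [lra|]. rewrite Rinv_l by lra. lra. }
  set (F := fun k => Fobj m n r grp A b lam q (x k)).
  set (D := fun k => rsum n (fun j => (x (S k) j - x k j) ^ 2)).
  set (M := K / (INR n + 1)).
  assert (HnM : 0 < INR n + 1) by (generalize (pos_INR n); lra).
  assert (HM : 0 < M) by (unfold M; apply Rdiv_lt_0_compat; lra).
  assert (HnMK : INR n * M < K).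
  { unfold M. apply (Rmult_lt_reg_r (INR n + 1)); auto. unfold Rdiv.
    replace (INR n * (K * / (INR n + 1)) * (INR n + 1)) with (INR n * K) by (field; lra). nra. }
  destruct (eventually_small F D c0 (M ^ 2)) as [N HN]; auto.
  - nra.
  - intros k. unfold F, Fobj. apply Rplus_le_le_0_compat.
    apply rsum_nonneg; intros; apply pow2_ge_0.
    apply Rmult_le_pos; [lra|]. apply rsum_nonneg; intros; apply rpow_nonneg.
  - intros k. unfold F, D. apply (descent m n r grp A b lam q v s); auto.
  - intros k. unfold D. apply rsum_nonneg; intros; apply pow2_ge_0.
  - set (N' := Nat.max N 1).
    assert (Hstep : forall k, (N' <= k)%nat -> forall i, (i < r)%nat ->
       (group_zero n grp (x (S k)) i <-> group_zero n grp (x k) i)).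
    { intros k Hk i Hi.
      assert (Hd : forall j, (j < n)%nat -> Rabs (x (S k) j - x k j) <= M).
      { intros j Hj. assert (HDk : D k < M ^ 2) by (apply HN; lia).
        assert ((x (S k) j - x k j) ^ 2 <= D k) by (apply (sq_le_rsum n (fun j => x (S k) j - x k j)); auto).
        rewrite <- pow2_abs in H. generalize (Rabs_pos (x (S k) j - x k j)). nra. }
      split; intros Hz; apply NNPP; intros Hnz.
      - assert (K <= gnorm1 n grp (x k) i) by (apply P1; auto; lia).
        assert (gnorm1 n grp (x k) i <= INR n * M).
        { apply (small_group n grp _ (x (S k))); auto; [lra|]. intros j Hj. rewrite Rabs_minus_sym. auto. }
        lra.
      - assert (K <= gnorm1 n grp (x (S k)) i) by (apply P1; auto; lia).
        assert (gnorm1 n grp (x (S k)) i <= INR n * M) by (apply (small_group n grp _ (x k)); auto; lra).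
        lra. }
    assert (Hall : forall p i, (i < r)%nat -> (group_zero n grp (x (N' + p)%nat) i <-> group_zero n grp (x N') i)).
    { induction p; intros i Hi. rewrite Nat.add_0_r; tauto.
      replace (N' + S p)%nat with (S (N' + p)) by lia.
      rewrite Hstep by (auto; lia). apply IHp; auto. }
    exists N', (fun i => (i < r)%nat /\ ~ group_zero n grp (x N') i). split.
    + intros i [Hi _]; auto.
    + intros k Hk i Hi. replace k with (N' + (k - N'))%nat by lia.
      rewrite (Hall _ i Hi). split.
      * intros [_ H]; auto.
      * intros H. apply NNPP. intros H2. apply H. split; auto.
Qed.
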